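(* Let $K$ be a valued field and $d\ge1$. The Helly number of $\operatorname{Conv}_{K^d}$ is exactly $d+1$: for every $n$ and all convex $S_1,\dots,S_n\subseteq K^d$, if every $d+1$ of them have nonempty common intersection then $\bigcap_{i=1}^nS_i\ne\emptyset$; and there exist convex sets in $K^d$ any $d$ of which intersect but whose total intersection is empty.
   Context: $K$ is a field with valuation $\nu$ and valuation ring $\mathcal{O}=\{x:\nu(x)\ge0\}$. A set $X\subseteq K^d$ is convex if it is closed under combinations $\sum_{i=1}^n\alpha_ix_i$ with $x_i\in X$, $\alpha_i\in\mathcal{O}$, $\sum\alpha_i=1$; $\operatorname{Conv}_{K^d}$ is the family of all convex subsets of $K^d$. The Helly number of a family $\mathcal{F}$ is the least $k$ such that for any finitely many $S_1,\dots,S_n\in\mathcal{F}$, if every $k$ of them have nonempty intersection then all of them do. *)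

(* Defs.v *)
From HB Require Import structures.
From mathcomp Require Import all_boot all_order all_algebra.
Set Implicit Arguments. Unset Strict Implicit. Unset Printing Implicit Defensive.
Import Order.TTheory GRing.Theory Num.Theory.
Local Open Scope ring_scope.

(* Order on Gamma ∪ {∞}, where None represents ∞. *)
Definition ole (Γ : Type) (le : rel Γ) (a b : option Γ) : bool :=
  match a, b with
  | _, None => true
  | None, Some _ => false
  | Some x, Some y => le x y
  end.

Definition oadd (Γ : zmodType) (a b : option Γ) : option Γ :=
  match a, b with
  | Some x, Some y => Some (x + y)
  | _, _ => None
  end.

Record is_ordered_group (Γ : zmodType) (le : rel Γ) : Prop := {
  og_refl : forall a, le a a;
  og_trans : forall a b c, le a b -> le b c -> le a c;
  og_antisym : forall a b, le a b -> le b a -> a = b;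
  og_total : forall a b, le a b || le b a;
  og_add : forall a b c, le a b -> le (a + c) (b + c)
}.

Record is_valuation (K : fieldType) (Γ : zmodType) (le : rel Γ)
    (v : K -> option Γ) : Prop := {
  val_group : is_ordered_group le;
  val_zero : v 0 = None;
  val_nonzero : forall x, x != 0 -> v x <> None;
  val_mul : forall x y, v (x * y) = oadd (v x) (v y);
  (* min(v x, v y) <= v (x + y) *)
  val_add : forall x y, ole le (v x) (v (x + y)) || ole le (v y) (v (x + y))
}.

Definition val_ring (K : fieldType) (Γ : zmodType) (le : rel Γ)
    (v : K -> option Γ) (x : K) : Prop := ole le (Some 0) (v x).

Definition vconvex (K : fieldType) (Γ : zmodType) (le : rel Γ)
    (v : K -> option Γ) (d : nat) (X : 'rV[K]_d -> Prop) : Prop :=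
  forall (n : nat) (x : 'I_n -> 'rV[K]_d) (a : 'I_n -> K),
    (forall i, X (x i)) -> (forall i, val_ring le v (a i)) ->
    \sum_(i < n) a i = 1 ->
    X (\sum_(i < n) a i *: x i).

(* Main.v *)
Require Import Defs.
From HB Require Import structures.
From mathcomp Require Import all_boot all_order all_algebra.
From Stdlib Require Import ClassicalEpsilon.
Import Order.TTheory GRing.Theory Num.Theory.
Local Open Scope ring_scope.
Set Implicit Arguments.

Lemma ole_trans (Γ : zmodType) (le : rel Γ) : is_ordered_group le ->
  forall a b c, ole le a b -> ole le b c -> ole le a c.
Proof.
move=> og [a|] [b|] [c|] //=; exact: og_trans.
Qed.

Lemma ole_total (Γ : zmodType) (le : rel Γ) : is_ordered_group le ->
  forall a b, ole le a b || ole le b a.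
Proof. move=> og [a|] [b|] //=; exact: og_total. Qed.

Lemma ole_refl (Γ : zmodType) (le : rel Γ) : is_ordered_group le ->
  forall a, ole le a a.
Proof. move=> og [a|] //=; exact: og_refl. Qed.

Lemma argmin_seq (T : eqType) (r : rel T) :
  (forall a, r a a) -> (forall a b c, r a b -> r b c -> r a c) ->
  (forall a b, r a b || r b a) ->
  forall (x : T) (s : seq T), exists2 m, m \in x :: s & forall t, t \in x :: s -> r m t.
Proof.
move=> rr rt rT x; elim=> [|y s [m hm1 hm2]].
  exists x; first by rewrite inE. by move=> t; rewrite inE => /eqP ->.
have [hmy|hym] := orP (rT m y).
  exists m; first by move: hm1; rewrite !inE => /orP [->|->]; rewrite ?orbT.
  move=> t; rewrite !inE => /or3P [/eqP->|/eqP->|ht]; first exact: hm2 (mem_head _ _).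
    exact: hmy.
  by apply: hm2; rewrite inE ht orbT.
exists y; first by rewrite !inE eqxx orbT.
move=> t; rewrite !inE => /or3P [/eqP->|/eqP->|ht]; first exact: rt hym (hm2 _ (mem_head _ _)).
  exact: rr.
by apply: rt hym (hm2 _ _); rewrite inE ht orbT.
Qed.

Lemma argmin_fin (I : finType) (Γ : zmodType) (le : rel Γ) (g : I -> option Γ) :
  is_ordered_group le -> forall x0 : I, exists t0, forall t, ole le (g t0) (g t).
Proof.
move=> og x0.
have [m _ hm] := @argmin_seq I (fun a b : I => ole le (g a) (g b))
  (fun a => @ole_refl _ _ og _) (fun a b c => @ole_trans _ _ og _ _ _)
  (fun a b => @ole_total _ _ og _ _) x0 (enum I).
exists m => t; apply: hm; by rewrite inE mem_enum orbT.
Qed.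

Lemma val_one (K : fieldType) (Γ : zmodType) (le : rel Γ) (v : K -> option Γ) :
  is_valuation le v -> v 1 = Some 0.
Proof.
move=> hv; have := val_mul hv 1 1; rewrite mulr1.
case e: (v 1) => [g|] /=; last by have := val_nonzero hv (oner_neq0 K); rewrite e.
move=> [] /(congr1 (fun x => x - g)); rewrite addrK subrr => <-. done.
Qed.

Lemma val_m1 (K : fieldType) (Γ : zmodType) (le : rel Γ) (v : K -> option Γ) :
  is_valuation le v -> v (-1) = Some 0.
Proof.
move=> hv; have := val_mul hv (-1) (-1); rewrite mulrNN mulr1 (val_one hv).
case e: (v (-1)) => [h|] //= [hh].
have og := val_group hv.
have [h0|h0] := orP (og_total og 0 h).
  have := og_add og h h0; rewrite add0r -hh => h1.
  by congr Some; apply: og_antisym og _ _ h1 h0.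
have := og_add og h h0; rewrite add0r -hh => h1.
by congr Some; apply: og_antisym og _ _ h0 h1.
Qed.

Lemma val_opp (K : fieldType) (Γ : zmodType) (le : rel Γ) (v : K -> option Γ) :
  is_valuation le v -> forall x, v (- x) = v x.
Proof.
move=> hv x; rewrite -mulN1r (val_mul hv) (val_m1 hv).
by case: (v x) => //= g; rewrite add0r.
Qed.
Lemma radon (K : fieldType) (d k : nat) (y : 'I_k -> 'rV[K]_d) :
  (d.+1 < k)%N ->
  exists lam : 'I_k -> K, (exists i, lam i != 0) /\
    \sum_i lam i *: y i = 0 /\ \sum_i lam i = 0.
Proof.
move=> hk.
pose Y : 'M[K]_(k, d) := \matrix_(i < k) y i.
pose A := row_mx Y (const_mx 1 : 'M[K]_(k, 1)).
have hA : kermx A != 0.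
  rewrite kermx_eq0 -row_leq_rank -ltnNge.
  apply: (leq_ltn_trans (rank_leq_col A)); by rewrite addn1.
have [i hi] : exists i, row i (kermx A) != 0.
  apply/existsP; apply: contraR hA; rewrite negb_exists => /forallP h.
  apply/eqP/row_matrixP => i; rewrite row0; by move: (h i); rewrite negbK => /eqP.
set u := row i (kermx A) in hi.
have hu : u *m A = 0 by rewrite /u -row_mul mulmx_ker row0.
clearbody u; move: hu; rewrite mul_mx_row -row_mx0 => /eq_row_mx [h1 h2].
exists (fun j => u 0 j); split; last split.
- apply/existsP; apply: contraR hi; rewrite negb_exists => /forallP h.
  apply/eqP/rowP => j; rewrite mxE; by move: (h j); rewrite negbK => /eqP.
- rewrite -[RHS]h1 mulmx_sum_row; apply: eq_bigr => j _; by rewrite rowK.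
- have h3 : (u *m (const_mx 1 : 'M[K]_(k,1))) 0 0 = 0 by rewrite h2 mxE.
  rewrite -[RHS]h3 mxE.
  apply: eq_bigr => j _; by rewrite mxE mulr1.
Qed.

Lemma helly_step (K : fieldType) (Γ : zmodType) (le : rel Γ) (v : K -> option Γ)
  (d n : nat) (S : 'I_n -> 'rV[K]_d -> Prop) (J : {set 'I_n}) (f : 'I_n -> 'rV[K]_d) :
  is_valuation le v -> (forall i, vconvex le v (S i)) -> (d.+1 < #|J|)%N ->
  (forall i j, i \in J -> j \in J -> i != j -> S i (f j)) ->
  exists x, forall i, i \in J -> S i x.
Proof.
move=> hv hS hJ hf.
have og := val_group hv.
pose y := fun t : 'I_#|J| => f (enum_val t).
have [lam [[i1 hi1] [hl1 hl2]]] := @radon _ _ _ y hJ.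
have [t0 ht0] := @argmin_fin _ _ le (fun t => v (lam t)) og i1.
have [c hc] : exists c, v (lam t0) = Some c.
  case e: (v (lam t0)) => [c|]; first by exists c.
  have := ht0 i1; rewrite e; case e1: (v (lam i1)) => //.
  by have := val_nonzero hv hi1; rewrite e1.
have l0 : lam t0 != 0 by apply/eqP => e; rewrite e (val_zero hv) in hc.
have [t1 ht1] : exists t1, t1 != t0.
  have h2 : (1 < #|J|)%N by apply: leq_trans hJ.
  case: (eqVneq (Ordinal h2) t0) => [e|ne]; last by exists (Ordinal h2).
  have h0 : (0 < #|J|)%N by apply: ltn_trans (h2).
  by exists (Ordinal h0); rewrite -e -val_eqE.
pose c' := - (lam t0)^-1.
pose mu := fun t => if t == t0 then 0 else lam t * c'.
pose z := fun t => if t == t0 then y t1 else y t.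
exists (y t0) => i hi.
case: (eqVneq i (enum_val t0)) => [->|ne]; last first.
  by apply: hf => //; exact: enum_valP.
have -> : y t0 = \sum_t mu t *: z t.
  rewrite (bigD1 t0) //= /mu eqxx scale0r add0r.
  have e1 : \sum_(t | t != t0) lam t *: y t = - (lam t0 *: y t0).
    by move: hl1; rewrite (bigD1 t0) //= => hl1; apply/eqP; rewrite -addr_eq0 addrC hl1.
  transitivity (c' *: \sum_(t | t != t0) lam t *: y t).
    by rewrite e1 /c' scalerN scaleNr opprK scalerA mulVf // scale1r.
  rewrite scaler_sumr; apply: eq_bigr => t nt.
  by rewrite /mu /z (negbTE nt) scalerA mulrC.
apply: hS.
- move=> t; rewrite /z; case: ifP => [_|/negbT nt].
    apply: hf; [exact: enum_valP|exact: enum_valP|].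
    by apply: contra ht1 => /eqP /enum_val_inj ->.
  apply: hf; [exact: enum_valP|exact: enum_valP|].
  by apply: contra nt => /eqP /enum_val_inj ->.
- move=> t; rewrite /val_ring /mu; case: ifP => _; first by rewrite (val_zero hv).
  rewrite (val_mul hv).
  have [g hg] : exists g, v c' = Some g /\ g = - c.
    have := val_mul hv c' (lam t0).
    rewrite /c' mulNr mulVf // (val_m1 hv) hc.
    case: (v (- (lam t0)^-1)) => [g|] //= [e]; exists g; split => //.
    by apply/eqP; rewrite -addr_eq0 -e.
  move: hg => [-> ->].
  move: (ht0 t); rewrite hc; case: (v (lam t)) => [b|] //= hb.
  by have := og_add og (- c) hb; rewrite subrr.
- rewrite (bigD1 t0) //= /mu eqxx add0r.
  have e1 : \sum_(t | t != t0) lam t = - lam t0.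
    by move: hl2; rewrite (bigD1 t0) //= => hl2; apply/eqP; rewrite -addr_eq0 addrC hl2.
  rewrite (eq_bigr (fun t => lam t * c')); last by move=> t /negbTE ->.
  by rewrite -mulr_suml e1 /c' mulrNN mulfV.
Qed.

Lemma hyper_convex (K : fieldType) (Γ : zmodType) (le : rel Γ) (v : K -> option Γ)
  (d : nat) (a : 'I_d -> K) (b : K) :
  vconvex le v (fun x : 'rV[K]_d => \sum_j a j * x 0 j = b).
Proof.
move=> m x mu hx _ hmu.
transitivity (\sum_(t < m) mu t * b); last by rewrite -mulr_suml hmu mul1r.
rewrite (eq_bigr (fun j => \sum_t mu t * (a j * x t 0 j))); last first.
  move=> j _; rewrite summxE mulr_sumr; apply: eq_bigr => t _.
  by rewrite mxE mulrCA.
rewrite exchange_big; apply: eq_bigr => t _; by rewrite -mulr_sumr hx.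
Qed.

Unset Implicit Arguments.

Theorem theorem4p5 (K : fieldType) (Γ : zmodType) (le : rel Γ)
    (v : K -> option Γ) (d : nat) :
  is_valuation le v -> (1 <= d)%N ->
  (forall (n : nat) (S : 'I_n -> 'rV[K]_d -> Prop),
     (forall i, vconvex le v (S i)) ->
     (forall J : {set 'I_n}, (#|J| <= d.+1)%N ->
        exists x : 'rV[K]_d, forall i, i \in J -> S i x) ->
     exists x : 'rV[K]_d, forall i, S i x)
  /\
  (exists (n : nat) (S : 'I_n -> 'rV[K]_d -> Prop),
     (forall i, vconvex le v (S i)) /\
     (forall J : {set 'I_n}, (#|J| <= d)%N ->
        exists x : 'rV[K]_d, forall i, i \in J -> S i x) /\
     ~ (exists x : 'rV[K]_d, forall i, S i x)).
Proof.
move=> hv hd; split.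
  move=> n S hS hH.
  have main : forall m (J : {set 'I_n}), (#|J| <= m)%N ->
      exists x : 'rV[K]_d, forall i, i \in J -> S i x.
    elim=> [|m IH] J hJ.
      by apply: hH; apply: leq_trans hJ _.
    case: (leqP #|J| m) => hJm; first exact: IH.
    case: (leqP #|J| d.+1) => hJd; first exact: hH.
    have hf : forall j, exists x : 'rV[K]_d, j \in J -> forall i, i \in J :\ j -> S i x.
      move=> j; have [hj|hj] := boolP (j \in J); last first.
        by exists 0.
      have hc : (#|J :\ j| <= m)%N.
        by move: hJ; rewrite (cardsD1 j J) hj /= add1n ltnS.
      have [x hx] := IH _ hc.
      by exists x.
    pose f := fun j => proj1_sig (constructive_indefinite_description _ (hf j)).
    apply: (@helly_step _ _ le v d n S J f hv hS hJd) => i j hi hj hij.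
    have := proj2_sig (constructive_indefinite_description _ (hf j)) hj i.
    by apply; rewrite in_setD1 hij hi.
  have hc : (#|[set: 'I_n]| <= n)%N by rewrite cardsT card_ord.
  have [x hx] := main n _ hc.
  by exists x => i; apply: hx; rewrite inE.
pose a := fun (i : 'I_d.+1) (j : 'I_d) => if i == ord_max then (1 : K) else ((j : nat) == i)%:R.
pose b := fun (i : 'I_d.+1) => ((i == ord_max)%:R : K).
exists d.+1, (fun i (x : 'rV[K]_d) => \sum_j a i j * x 0 j = b i); split; [|split].
- move=> i; exact: hyper_convex.
- move=> J hJ.
  case: (boolP (ord_max \in J)) => hm; last first.
    exists 0 => i hi; rewrite /b; case: eqP => [ei|_]; first by rewrite -ei hi in hm.
    by rewrite big1 // => j _; rewrite mxE mulr0.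
  have [i0 hi0] : exists i0 : 'I_d.+1, (i0 != ord_max) && (i0 \notin J).
    apply/existsP; apply: contraTT hJ; rewrite negb_exists => /forallP h.
    have hT : J = [set: 'I_d.+1].
      apply/setP => i; rewrite inE; case: (eqVneq i ord_max) => [->//|ne].
      by move: (h i); rewrite ne /= negbK.
    by rewrite -ltnNge hT cardsT card_ord.
  move: hi0 => /andP [ne0 nJ].
  have hi0d : (i0 < d)%N by rewrite ltn_neqAle -ltnS ltn_ord andbT; move: ne0; rewrite -val_eqE.
  pose j0 : 'I_d := Ordinal hi0d.
  exists (\row_j ((j == j0)%:R : K)) => i hi.
  rewrite (bigD1 j0) //= big1; last first.
    by move=> j nj; rewrite mxE (negbTE nj) mulr0.
  rewrite mxE eqxx mulr1 addr0 /a /b.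
  case: eqP => [_|ni]; first by [].
  have : i != i0 by apply: contraTneq hi => ->.
  move=> h; have : (i : nat) != i0 by rewrite val_eqE.
  by rewrite /= eq_sym => /negbTE ->.
- case=> x hx.
  have h0 : forall j : 'I_d, x 0 j = 0.
    move=> j; have := hx (widen_ord (leqnSn d) j).
    have ne : widen_ord (leqnSn d) j != ord_max by rewrite -val_eqE /= neq_ltn ltn_ord.
    rewrite /a /b (negbTE ne) (bigD1 j) //= eqxx mul1r big1 ?addr0 //.
    move=> k nk; have : (k : nat) != j by rewrite val_eqE.
    by move/negbTE => /= ->; rewrite mul0r.
  have := hx ord_max; rewrite /a /b eqxx big1; last by move=> j _; rewrite h0 mulr0.
  by move/eqP; rewrite eq_sym oner_eq0.
Qed.
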